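(* Every totally disconnected compact metric space has the $\omega$-FTP property. In particular, the Cantor space has the $\omega$-FTP property.
   Context: For continuous $f:X\to X$ and $x\in X$, $\omega_f(x)=\{y:\ \exists\, n_i\to+\infty,\ f^{n_i}(x)\to y\}$, totally periodic if all its points are periodic for $f$. A compact metric space $X$ has the $\omega$-FTP property if for every continuous $f:X\to X$, every totally periodic $\omega$-limit set of $f$ is finite. *)

(* Defs.v *)
From HB Require Import structures.
From mathcomp Require Import all_boot all_order all_algebra.
From mathcomp Require Import all_classical all_reals all_analysis.

Set Implicit Arguments.
Unset Strict Implicit.
Unset Printing Implicit Defensive.

Import Order.TTheory GRing.Theory Num.Theory.
Local Open Scope classical_set_scope.

Definition omega_limit {T : topologicalType} (f : T -> T) (x : T) : set T :=
  [set y | exists n : nat -> nat,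
      (forall N : nat, exists i0 : nat, forall i : nat, (i0 <= i)%N -> (N <= n i)%N)
      /\ ((fun i => iter (n i) f x) @ \oo --> y)].

Definition periodic_point {T : Type} (f : T -> T) (y : T) : Prop :=
  exists p : nat, (0 < p)%N /\ iter p f y = y.

Definition totally_periodic {T : Type} (f : T -> T) (A : set T) : Prop :=
  forall y, A y -> periodic_point f y.

Definition omega_FTP (T : topologicalType) : Prop :=
  forall f : T -> T, continuous f ->
  forall x : T, totally_periodic f (omega_limit f x) -> finite_set (omega_limit f x).

(* Main.v *)
From HB Require Import structures.
From mathcomp Require Import all_boot all_order all_algebra.
From mathcomp Require Import all_classical all_reals all_analysis.
Require Import Defs.
From mathcomp Require Import zify Rstruct.
Import Order.TTheory GRing.Theory Num.Theory.
Local Open Scope classical_set_scope.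

Lemma compact_base (T : topologicalType) (I : Type) (D : I -> set T) :
  compact [set: T] -> inhabited I -> (forall i, closed (D i)) ->
  (forall i j, exists k, D k `<=` D i `&` D j) -> (forall i, D i !=set0) ->
  exists p, forall i, D i p.
Proof.
move=> cT [i0] cD dir ne.
have FF : Filter (filter_from [set: I] D).
  apply: filter_from_filter; first by exists i0.
  by move=> i j _ _; have [k Hk] := dir i j; exists k.
have PF : ProperFilter (filter_from [set: I] D).
  by apply: filter_from_proper => i _; exact: ne.
have [p [_ cp]] := cT _ PF filterT.
exists p => i; apply: (cD i) => B nB.
have := cp (D i) B; apply; last exact: nB.
by exists i.
Qed.

Lemma zero_dim_of_td (R : realType) (T : topologicalType) :
  hausdorff_space T -> compact [set: T] -> totally_disconnected [set: T] ->
  zero_dimensional T.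
Proof.
move=> hT cT tdT x y xy.
apply: contrapT => nU.
have Hc : forall U : set T, clopen U -> U x -> U y.
  move=> U cU Ux; apply: contrapT => nUy; apply: nU; by exists U.
pose Q := [set z | forall U : set T, clopen U -> U x -> U z].
have Qx : Q x by [].
have cQ : closed Q.
  move=> p cp U cU Ux; apply: (proj2 cU) => B nB.
  have [z [Qz Bz]] := cp B nB; exists z; split => //; exact: Qz.
have kl : forall U V : set T, open U -> open V -> U `&` V = set0 ->
    Q `<=` U `|` V -> U x -> Q `<=` U.
  move=> U V oU oV UV0 QUV Ux.
  have [C [cC Cx CUV]] : exists C, [/\ clopen C, C x & C `<=` U `|` V].
    apply: contrapT => nC.
    pose Idx := {C : set T | clopen C /\ C x}.
    have [p Hp] : exists p, forall C : Idx, (sval C `&` ~` (U `|` V)) p.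
      apply: (@compact_base T Idx (fun C => sval C `&` ~` (U `|` V)) cT
       (inhabits (exist _ setT (conj clopenT I)))).
      - move=> [C [cC _]] /=; apply: closedI; first exact: (proj2 cC).
        by apply: open_closedC; exact: openU.
      - move=> [C1 [c1 x1]] [C2 [c2 x2]].
        exists (exist _ (C1 `&` C2) (conj (clopenI c1 c2) (conj x1 x2))) => /=.
        by move=> z [[z1 z2] zn]; split; split.
      - move=> [C [cC Cx]] /=; apply: contrapT => /set0P/negP; rewrite negbK => /eqP e.
        apply: nC; exists C; split => // z Cz; apply: contrapT => nz.
        by have : (C `&` ~` (U `|` V)) z by []; rewrite e.
    have Qp : Q p.
      move=> W cW Wx; exact: (proj1 (Hp (exist _ W (conj cW Wx)))).
    by have := proj2 (Hp (exist _ setT (conj clopenT I))); apply; exact: QUV.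
  have cCU : clopen (C `&` U).
    split; first by apply: openI => //; exact: (proj1 cC).
    have -> : C `&` U = C `&` ~` V.
      apply/seteqP; split => z [Cz Hz]; split => //.
        by move=> Vz; have : (U `&` V) z by []; rewrite UV0.
      by case: (CUV z Cz).
    by apply: closedI; [exact: (proj2 cC)|exact: open_closedC].
  by move=> z Qz; have [] := Qz _ cCU.
have conQ : connected Q.
  move=> B [b Bb] [Op oO BO] [Cl cCl BC].
  pose B2 := Q `&` ~` Op.
  have cB1 : closed B by rewrite BC; exact: closedI.
  have cB2 : closed B2 by apply: closedI => //; exact: open_closedC.
  have d12 : B `&` B2 = set0.
    apply/seteqP; split => // z [Bz [_ nO]]; move: Bz; rewrite BO => -[_ //].
  have QB : Q `<=` B `|` B2.
    move=> z Qz; have [Oz|nOz] := pselect (Op z); [left; rewrite BO|right] => //.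
  have [U [V [oU oV BU B2V UV]]] := (iffLR (normal_openP (R:=R))) (compact_normal hT cT) _ _ cB1 cB2 d12.
  have QUV : Q `<=` U `|` V by move=> z /QB [/BU|/B2V]; [left|right].
  have [Bx|nBx] := pselect (B x).
    apply/seteqP; split; first by rewrite BO => z [].
    move=> z Qz; have := kl U V oU oV UV QUV (BU _ Bx) _ Qz => Uz.
    case: (QB z Qz) => // /B2V Vz.
    by have : (U `&` V) z by []; rewrite UV.
  have B2x : B2 x by case: (QB x Qx).
  have [VU UV'] : V `&` U = set0 /\ Q `<=` V `|` U.
    by split; [rewrite setIC | move=> z /QUV [];[right|left]].
  have Qb : Q b by move: Bb; rewrite BO => -[].
  have := kl V U oV oU VU UV' (B2V _ B2x) _ Qb => Vb.
  have : (U `&` V) b by split => //; exact: BU.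
  by rewrite UV.
have : connected_component [set: T] x y.
  by apply: (connected_component_max Qx) => //; exact: Hc.
rewrite tdT // => yx; move: xy; rewrite yx eqxx //.
Qed.

Section dyn.
Context {R : realType} {X : pseudoMetricType R}.
Variables (f : X -> X) (x : X).

Definition Lim (y : X) := forall N, nbhs y N -> forall K, exists2 k, (K <= k)%N & N (iter k f x).

Lemma omegaE y : omega_limit f x y <-> Lim y.
Proof.
split.
  move=> [n [Hn Hc]] N nN K.
  have := Hc _ nN; rewrite /= /nbhs /= => -[i1 _ Hi1].
  have [i0 Hi0] := Hn K.
  exists (n (maxn i0 i1)); first by apply: Hi0; exact: leq_maxl.
  by apply: Hi1 => /=; exact: leq_maxr.
move=> L.
have : forall i : nat, exists k, (i <= k)%N /\ ball y (i.+1%:R^-1)%R (iter k f x).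
  move=> i; have nb : nbhs y (ball y (i.+1%:R^-1)%R).
    by apply: nbhsx_ballx; rewrite invr_gt0 ltr0n.
  have [k ik bk] := L _ nb i.
  by exists k.
move=> /choice [n Hn]; exists n; split.
  by move=> N; exists N => i Ni; apply: leq_trans Ni (proj1 (Hn i)).
move=> N /nbhs_ballP [e /= e0 eN].
have := near_infty_natSinv_lt (PosNum e0) => -[i0 _ Hi0].
exists i0 => // i /= i0i; apply: eN.
apply: le_ball (proj2 (Hn i)); apply: ltW; exact: Hi0.
Qed.


Hypothesis fc : continuous f.
Hypothesis hX : hausdorff_space X.
Hypothesis cX : compact [set: X].
Hypothesis zX : zero_dimensional X.

Lemma iter_cont m : continuous (iter m f).
Proof.
elim: m => [|m IH] z /=; first exact: cvg_id.
exact: (continuous_comp (IH z) (fc _)).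
Qed.

Lemma Lim_closed : closed Lim.
Proof.
move=> p cp N nN K.
have := nN; rewrite nbhsE => -[W0 [oW0 Op] ON].
have [z [Lz Oz]] := cp W0 (open_nbhs_nbhs (conj oW0 Op)).
have [k Kk Ok] := Lz W0 (open_nbhs_nbhs (conj oW0 Oz)) K.
by exists k => //; exact: ON.
Qed.

Lemma eventually_in {W0 : set X} : open W0 -> Lim `<=` W0 ->
  exists K, forall k, (K <= k)%N -> W0 (iter k f x).
Proof.
move=> oW0 LO; apply: contrapT => nE.
have inf : forall K, exists2 k, (K <= k)%N & ~ W0 (iter k f x).
  move=> K; apply: contrapT => nk; apply: nE; exists K => k Kk.
  apply: contrapT => nO; apply: nk; by exists k.
pose S K := [set z | exists2 k, (K <= k)%N & z = iter k f x /\ ~ W0 z].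
have [p Hp] : exists p, forall K, closure (S K) p.
  apply: (@compact_base X nat (fun K => closure (S K)) cX (inhabits 0%N)).
  - move=> K; exact: closed_closure.
  - move=> i j; exists (maxn i j) => z Hz; split; apply: (closureS _ Hz).
      by move=> w [k ik [-> nO]]; exists k => //; apply: leq_trans ik; exact: leq_maxl.
    by move=> w [k ik [-> nO]]; exists k => //; apply: leq_trans ik; exact: leq_maxr.
  - move=> K; have [k Kk nO] := inf K; exists (iter k f x).
    by apply: subset_closure; exists k.
have Lp : Lim p.
  move=> N nN K; have [z [[k Kk [-> _]] Nz]] := Hp K N nN.
  by exists k.
have [z [[k _ [-> nO]] Oz]] := Hp 0%N W0 (open_nbhs_nbhs (conj oW0 (LO _ Lp))).
exact: nO.
Qed.

Lemma trap (V : set X) m : clopen V ->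
  (forall z, V z -> Lim z -> V (iter m f z)) ->
  exists K, forall k, (K <= k)%N -> V (iter k f x) ->
    forall j, V (iter (k + j * m) f x).
Proof.
move=> [oV cV] HV.
pose W0 := (V `&` (iter m f) @^-1` V) `|` ~` V.
have oW0 : open W0.
  apply: openU; last exact: closed_openC.
  apply: openI => //; apply: open_comp => // z _; exact: iter_cont.
have LO : Lim `<=` W0.
  move=> z Lz; have [Vz|nVz] := pselect (V z); [left|right] => //.
  by split => //; exact: HV.
have [K HK] := eventually_in oW0 LO.
exists K => k Kk Vk j; elim: j => [|j IH]; first by rewrite mul0n addn0.
have : W0 (iter (k + j * m) f x) by apply: HK; exact: leq_trans Kk (leq_addr _ _).
case=> [[_ V']|nV]; last by exfalso; exact: nV IH.
by rewrite mulSn addnCA iterD.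
Qed.

Lemma baire_step : (exists y, Lim y) -> (forall y, Lim y -> periodic_point f y) ->
  exists n U y, [/\ clopen U, U y, Lim y &
    forall z, U z -> Lim z -> iter n.+1 f z = z].
Proof.
move=> [y0 Ly0] Hper; apply: contrapT => H.
have H' : forall n U, clopen U -> (exists y, U y /\ Lim y) ->
    exists z, [/\ U z, Lim z & iter n.+1 f z <> z].
  move=> n U cU [y [Uy Ly]]; apply: contrapT => nz; apply: H.
  exists n, U, y; split => // z Uz Lz; apply: contrapT => ne; apply: nz.
  by exists z.
pose good (U : set X) := clopen U /\ exists y, U y /\ Lim y.
have step : forall n (U : {U | good U}), exists U' : {U' | good U'},
    sval U' `<=` sval U /\ forall z, sval U' z -> iter n.+1 f z <> z.
  move=> n [U [cU eU]] /=.
  have [z [Uz Lz gz]] := H' n U cU eU.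
  have [A [B [nA nB AB]]] : exists A B, [/\ nbhs (iter n.+1 f z) A, nbhs z B &
      A `&` B = set0].
    apply: contrapT => nAB; apply: gz; apply: hX => A B nA nB.
    apply/set0P/negP => /eqP e; apply: nAB; by exists A, B.
  have nW : nbhs z (B `&` (iter n.+1 f @^-1` A) `&` U).
    apply: filterI; first apply: filterI => //.
      exact: iter_cont.
    by apply: open_nbhs_nbhs; split => //; exact: (proj1 cU).
  have [D [Dz cD] DW] := zero_dimensional_cvg hX zX cX nW.
  have gD : good D by split => //; exists z.
  exists (exist _ D gD) => /=; split.
    by move=> w /DW [].
  move=> w /DW [[Bw Aw] _] e; move: Aw; rewrite /preimage /= e => Aw.
  by have : (A `&` B) w by []; rewrite AB.
have stepf : forall n (U : {U | good U}), {U' : {U' | good U'} |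
    sval U' `<=` sval U /\ forall z, sval U' z -> iter n.+1 f z <> z}.
  by move=> n U; apply: cid; exact: step.
have g0 : good setT by split; [exact: clopenT|by exists y0].
pose C := fix C k := if k is k'.+1 then sval (stepf k' (C k')) else exist _ setT g0.
have CS : forall k, C k.+1 = sval (stepf k (C k)) by [].
have nest : forall i j, (i <= j)%N -> sval (C j) `<=` sval (C i).
  move=> i j; elim: j => [|j IH]; first by rewrite leqn0 => /eqP ->.
  rewrite leq_eqVlt => /orP [/eqP ->//|]; rewrite ltnS => ij.
  apply: subset_trans (IH ij); rewrite CS.
  exact: (proj1 (svalP (stepf j (C j)))).
have [p Hp] : exists p, forall k, (sval (C k) `&` Lim) p.
  apply: (@compact_base X nat (fun k => sval (C k) `&` Lim) cX (inhabits 0%N)).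
  - move=> k; apply: closedI; last exact: Lim_closed.
    exact: (proj2 (proj1 (svalP (C k)))).
  - move=> i j; exists (maxn i j) => z [Cz Lz]; split; split => //.
      by apply: (nest i (maxn i j) (leq_maxl _ _)).
    by apply: (nest j (maxn i j) (leq_maxr _ _)).
  - move=> k; have [_ [y [Cy Ly]]] := svalP (C k); by exists y.
have [q [q0 qp]] := Hper p (proj2 (Hp 0%N)).
case: q q0 qp => [//|q] _ qp.
have := proj1 (Hp q.+1); rewrite CS => Cp.
exact: (proj2 (svalP (stepf q (C q))) p Cp qp).
Qed.

Lemma omega_finite : (forall y, Lim y -> periodic_point f y) -> finite_set Lim.
Proof.
move=> Hper; have [ex|nex] := pselect (exists y, Lim y); last first.
  have -> : Lim = set0 by apply/seteqP; split => // y Ly; apply: nex; exists y.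
  exact: finite_set0.
have [n [U [y [cU Uy Ly HU]]]] := baire_step ex Hper.
pose m := n.+1.
have m0 : (0 < m)%N by [].
have [r Hr] : exists r, forall N, nbhs y N -> forall K,
    exists k, [/\ (K <= k)%N, k %% m = r & N (iter k f x)].
  apply: contrapT => nr.
  have H1 : forall r : 'I_m, exists NK : set X * nat, nbhs y NK.1 /\
      forall k, (NK.2 <= k)%N -> k %% m = r -> ~ NK.1 (iter k f x).
    move=> r; apply: contrapT => h; apply: nr; exists (val r) => N nN K.
    apply: contrapT => h2; apply: h; exists (N, K); split => // k Kk kr Nk.
    by apply: h2; exists k.
  have [NK HNK] := choice H1.
  have nA : nbhs y (fun w => forall r : 'I_m, (NK r).1 w).
    by apply: filter_forall => r; exact: (proj1 (HNK r)).
  have [k Kk Ak] := Ly _ nA (\max_(r < m) (NK r).2).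
  pose r0 := Ordinal (ltn_pmod k m0).
  apply: (proj2 (HNK r0) k); last (by exact: Ak r0); last by [].
  by apply: leq_trans Kk; exact: (leq_bigmax (F := fun r => (NK r).2) r0).
have conv : forall N, nbhs y N -> exists J, forall j, (J <= j)%N ->
    N (iter (r + j * m) f x).
  move=> N nN.
  have nNU : nbhs y (N `&` U).
    apply: filterI => //; apply: open_nbhs_nbhs; split => //; exact: (proj1 cU).
  have [D [Dy cD] DNU] := zero_dimensional_cvg hX zX cX nNU.
  have HD : forall z, D z -> Lim z -> D (iter m f z).
    by move=> z Dz Lz; rewrite (HU z (proj2 (DNU z Dz)) Lz).
  have [K HK] := trap D m cD HD.
  have [k [Kk kr Dk]] := Hr D (open_nbhs_nbhs (conj (proj1 cD) Dy)) K.
  exists (k %/ m) => j jk.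
  have e : r + j * m = k + (j - k %/ m) * m.
    have h1 := divn_eq k m; rewrite mulnBl.
    have : (k %/ m * m <= j * m)%N by rewrite leq_mul2r jk orbT.
    move: h1 kr; set a := k %/ m * m; set b := j * m; set c := k %% m. lia.
  rewrite e; exact: (proj1 (DNU _ (HK k Kk Dk _))).
have convd : forall d N, nbhs (iter d f y) N -> exists J, forall j, (J <= j)%N ->
    N (iter (r + d + j * m) f x).
  move=> d N nN; have [J HJ] := conv _ (iter_cont d y N nN).
  exists J => j Jj; have := HJ j Jj; rewrite /preimage /= -iterD.
  by rewrite addnA (addnC d r).
apply: (@sub_finite_set _ _ [set iter d f y | d in `I_m]); last first.
  exact/finite_image/finite_II.
move=> z Lz; apply: contrapT => nz.
have H2 : forall d : 'I_m, exists AB : set X * set X,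
    [/\ nbhs z AB.1, nbhs (iter d f y) AB.2 & AB.1 `&` AB.2 = set0].
  move=> d; apply: contrapT => nAB; apply: nz; exists (val d) => //=.
  apply/esym/hX => A B nA nB.
  apply/set0P/negP => /eqP e; apply: nAB; by exists (A, B).
have [AB HAB] := choice H2.
have H3 : forall d : 'I_m, exists J, forall j, (J <= j)%N ->
    (AB d).2 (iter (r + d + j * m) f x).
  by move=> d; have [_ nB _] := HAB d; exact: convd.
have [J HJ] := choice H3.
have nA : nbhs z (fun w => forall d : 'I_m, (AB d).1 w).
  by apply: filter_forall => d; have [] := HAB d.
pose J0 := \max_(d < m) J d.
have [k Kk Ak] := Lz _ nA (r + J0 * m).
pose d0 := Ordinal (ltn_pmod (k - r) m0).
have ek : k = r + d0 + (k - r) %/ m * m.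
  have := divn_eq (k - r) m; rewrite /d0 /=; lia.
have Jq : (J d0 <= (k - r) %/ m)%N.
  apply: leq_trans (leq_bigmax (F := J) d0) _.
  rewrite -/J0 -(mulnK J0 m0); apply: leq_div2r; lia.
have Bk := HJ d0 _ Jq; rewrite -ek in Bk.
have [_ _ e] := HAB d0.
by have : ((AB d0).1 `&` (AB d0).2) (iter k f x) by []; rewrite e.
Qed.
End dyn.

Theorem corollary2p6 :
  (forall (R : realType) (X : pseudoMetricType R),
      hausdorff_space X -> compact [set: X] -> totally_disconnected [set: X] ->
      omega_FTP X)
  /\ omega_FTP cantor_space.
Proof.
have main : forall (R : realType) (X : pseudoMetricType R),
    hausdorff_space X -> compact [set: X] -> totally_disconnected [set: X] ->
    omega_FTP X.
  move=> R X hX cX tX f fc x tp.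
  have zX := @zero_dim_of_td R X hX cX tX.
  have E : omega_limit f x = Lim f x.
    by apply/seteqP; split => y /omegaE.
  rewrite E; apply: omega_finite => // y Ly; apply: tp; rewrite E.
  exact: Ly.
split => //.
exact: (@main Rdefinitions.R cantor_space cantor_space_hausdorff
  cantor_space_compact (zero_dimension_totally_disconnected cantor_zero_dimensional)).
Qed.
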